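(* Let $G=(V,E)$ be a finite simple graph with vertex set $V=\{v_1,\dots,v_n\}$, let $O$ be an orientation of $G$ and let $D:E\to\mathbb{N}$ assign a positive integer strength to every edge, so that $(G,D,O)$ is an augmented orientation. Let $k$ be the maximum augmented in-degree of a vertex in $(G,D,O)$. If the number of even Eulerian structures in $(G,D,O)$ is different from the number of odd Eulerian structures in $(G,D,O)$, then \[ AT(G)-1=\alpha(f_G)\le \alpha(W_{G,D})\le k . \]
   Context: For a nonzero polynomial $Q$, $\alpha(Q)$ denotes the minimum $k$ such that some monomial $m$ occurring in $Q$ with nonzero coefficient satisfies $\deg(m)=\deg(Q)$ and every variable has degree at most $k$ in $m$. The graph polynomial of $G$ is $f_G(x_1,\dots,x_n)=\prod_{i<j,\ \{v_i,v_j\}\in E}(x_i-x_j)$, and the Alon–Tarsi number is $AT(G)=\alpha(f_G)+1$. An augmented orientation $(G,D,O)$ consists of a graph $G$, an orientation $O$ of $G$, and $D:E\to\mathbb{N}$ assigning positive strengths to edges; the augmented in-degree (resp. out-degree) of a vertex is the sum of the strengths of its incoming (resp. outgoing) edges. The augmented graph polynomial is $W_{G,D}(x_1,\dots,x_n)=\prod_{i<j,\ e=\{v_i,v_j\}\in E}(x_i^{D(e)}-x_j^{D(e)})$. An Eulerian structure in $(G,D,O)$ is a subgraph $F$ of $G$ without isolated vertices (the empty graph is allowed) such that every vertex of $F$ has augmented in-degree equal to its augmented out-degree in $F$, with the orientation and strengths restricted from $O$ and $D$. An Eulerian structure is even (odd) if its number of edges is even (odd). *)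

(* Defs.v *)
From HB Require Import structures.
From mathcomp Require Import all_boot all_order all_algebra.
From mathcomp Require Import mpoly.
Set Implicit Arguments. Unset Strict Implicit. Unset Printing Implicit Defensive.
Import GRing.Theory.
Local Open Scope ring_scope.

(* Vertices are 'I_n (v_i = i).  A simple graph is a symmetric irreflexive
   relation [adj]; an orientation is a relation [o] with o i j meaning the
   edge {v_i,v_j} is oriented v_i -> v_j.  Strengths D : 'I_n -> 'I_n -> nat
   are read on edges (D symmetric, D e = D i j for e = {v_i,v_j}). *)

Definition simple_graph n (adj : rel 'I_n) :=
  (forall i, ~~ adj i i) /\ (forall i j, adj i j = adj j i).

Definition is_orientation n (adj o : rel 'I_n) :=
  forall i j, adj i j = (o i j || o j i) /\ ~~ (o i j && o j i).

Definition is_strength n (adj : rel 'I_n) (D : 'I_n -> 'I_n -> nat) :=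
  (forall i j, D i j = D j i) /\ (forall i j, adj i j -> (0 < D i j)%N).

Definition aug_indeg n (o : rel 'I_n) (D : 'I_n -> 'I_n -> nat) (v : 'I_n) : nat :=
  (\sum_(u < n | o u v) D u v)%N.

Definition max_aug_indeg n (o : rel 'I_n) D : nat :=
  (\max_(v < n) aug_indeg o D v)%N.

(* An Eulerian structure (a subgraph without isolated vertices) is determined
   by its edge set; we represent it by its set F of arcs (u,v) with o u v. *)
Definition eulerian_structure n (o : rel 'I_n) (D : 'I_n -> 'I_n -> nat)
  (F : {set 'I_n * 'I_n}) : bool :=
  (F \subset [set a | o a.1 a.2]) &&
  [forall v, (\sum_(a in F | a.2 == v) D a.1 a.2)%N
             == (\sum_(a in F | a.1 == v) D a.1 a.2)%N].

Definition num_even_ES n (o : rel 'I_n) D : nat :=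
  #|[set F : {set 'I_n * 'I_n} | eulerian_structure o D F && ~~ odd #|F|]|.
Definition num_odd_ES n (o : rel 'I_n) D : nat :=
  #|[set F : {set 'I_n * 'I_n} | eulerian_structure o D F && odd #|F|]|.

Definition graph_poly n (adj : rel 'I_n) : {mpoly int[n]} :=
  \prod_(i < n) \prod_(j < n | (i < j)%N && adj i j) ('X_i - 'X_j).

Definition aug_graph_poly n (adj : rel 'I_n) (D : 'I_n -> 'I_n -> nat)
  : {mpoly int[n]} :=
  \prod_(i < n) \prod_(j < n | (i < j)%N && adj i j)
     ('X_i ^+ D i j - 'X_j ^+ D i j).

(* alpha(Q): minimum over monomials m of Q of maximal total degree
   (deg Q = (msize Q).-1) of the largest exponent of m; i.e. the least k
   such that such a monomial has all exponents <= k.  (Meaningful for Q != 0.) *)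
Definition alpha n (Q : {mpoly int[n]}) : nat :=
  let s := [seq (\max_(i < n) (m : 'X_{1..n}) i)%N
           | m : 'X_{1..n} <- msupp Q & mdeg m == (msize Q).-1] in
  if s is x :: s' then foldr minn x s' else 0%N.

Definition AT n (adj : rel 'I_n) : nat := (alpha (graph_poly adj)).+1.

(* Main.v *)
Require Import Defs.
From HB Require Import structures.
From mathcomp Require Import all_boot all_order all_algebra.
From mathcomp Require Import mpoly.
Set Implicit Arguments. Unset Strict Implicit. Unset Printing Implicit Defensive.
Import GRing.Theory.
Local Open Scope ring_scope.

Lemma foldr_minn_le (x y : nat) s : y \in x :: s -> (foldr minn x s <= y)%N.
Proof.
elim: s => [|z s IH] /=; first by rewrite inE => /eqP ->.
rewrite geq_min !inE => /orP[H|/orP[H|H]].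
- by apply/orP; right; apply: IH; rewrite inE H.
- by rewrite (eqP H) leqnn.
- by apply/orP; right; apply: IH; rewrite inE H orbT.
Qed.

Lemma foldr_minn_mem (x : nat) s : foldr minn x s \in x :: s.
Proof.
elim: s => [|z s IH] /=; first exact: mem_head.
rewrite /minn; case: ifP => _; rewrite !inE ?eqxx ?orbT //.
move: IH; rewrite inE => /orP[->|->]; by rewrite ?orbT.
Qed.

Section A.
Variable n : nat.
Implicit Types (Q : {mpoly int[n]}) (m : 'X_{1..n}).

Lemma alpha_le Q m : m \in msupp Q -> mdeg m = (msize Q).-1 ->
  (alpha Q <= \max_(i < n) m i)%N.
Proof.
move=> Hm Hd; rewrite /alpha.
have : (\max_(i < n) m i)%N \in [seq (\max_(i < n) (m : 'X_{1..n}) i)%N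
           | m : 'X_{1..n} <- msupp Q & mdeg m == (msize Q).-1].
  by apply: map_f; rewrite mem_filter Hd eqxx.
case: [seq _ | _ <- _ & _] => [//|x s]; exact: foldr_minn_le.
Qed.

Lemma alpha_mem Q m : m \in msupp Q -> mdeg m = (msize Q).-1 ->
  exists m', [/\ m' \in msupp Q, mdeg m' = (msize Q).-1 &
     alpha Q = \max_(i < n) m' i].
Proof.
move=> Hm Hd; rewrite /alpha.
have : (\max_(i < n) m i)%N \in [seq (\max_(i < n) (m : 'X_{1..n}) i)%N
           | m : 'X_{1..n} <- msupp Q & mdeg m == (msize Q).-1].
  by apply: map_f; rewrite mem_filter Hd eqxx.
set s := [seq _ | _ <- _ & _].
have : forall y, y \in s -> exists m', [/\ m' \in msupp Q, mdeg m' = (msize Q).-1 &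
     y = \max_(i < n) m' i].
  move=> y /mapP [m' ]; rewrite mem_filter => /andP[/eqP H1 H2] ->.
  by exists m'.
case: s => [//|x s] Hall _; apply: Hall; exact: foldr_minn_mem.
Qed.

Lemma homog_deg Q d m : Q \is d.-homog -> m \in msupp Q -> mdeg m = (msize Q).-1.
Proof. by move=> /dhomog_msize /dhomogP H /H. Qed.

Definition ishom Q := exists d, Q \is d.-homog.

Lemma ishom_prod (I : Type) (r : seq I) (P : pred I) (F : I -> {mpoly int[n]}) :
  (forall i, P i -> ishom (F i)) -> ishom (\prod_(i <- r | P i) F i).
Proof.
move=> H; apply: (big_ind ishom) => //.
- by exists 0%N; exact: dhomog1.
- by move=> p q [d Hp] [e Hq]; exists (d + e)%N; exact: dhomogM.
Qed.

Lemma ishom_bin (i j : 'I_n) (d : nat) : ishom ('X_i ^+ d - 'X_j ^+ d).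
Proof.
exists d; rewrite !mpolyXn; apply: rpredB; by rewrite dhomogX /= mdegMn mdeg1 mul1n.
Qed.

End A.

Section B.
Variable n : nat.

Lemma alpha_mono (p q : {mpoly int[n]}) m : ishom p -> m \in msupp (p * q) ->
  mdeg m = (msize (p * q)).-1 -> (alpha p <= alpha (p * q))%N.
Proof.
move=> [d Hp] Hm Hd.
have [m' [Hm' Hd' ->]] := alpha_mem Hm Hd.
have /allpairsP [[m1 m2] /= [H1 H2 ->]] := msuppM_le Hm'.
apply: leq_trans (alpha_le H1 (homog_deg Hp H1)) _.
apply/bigmax_leqP => i _; apply: leq_trans (leq_bigmax i).
by rewrite mnmDE leq_addr.
Qed.

Lemma graph_poly_hom (adj : rel 'I_n) : ishom (graph_poly adj).
Proof.
apply: ishom_prod => i _; apply: ishom_prod => j _.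
exists 1%N; apply: rpredB; by rewrite dhomogX /= mdeg1.
Qed.

Lemma aug_factor (adj : rel 'I_n) D : exists q,
  aug_graph_poly adj D = graph_poly adj * q.
Proof.
exists (\prod_(i < n) \prod_(j < n | (i < j)%N && adj i j)
   \sum_(k < D i j) 'X_i ^+ ((D i j).-1 - k) * 'X_j ^+ k).
rewrite /aug_graph_poly /graph_poly -big_split; apply: eq_bigr => i _.
rewrite -big_split; apply: eq_bigr => j _; exact: subrXX.
Qed.

Lemma aug_hom (adj : rel 'I_n) D : ishom (aug_graph_poly adj D).
Proof.
apply: ishom_prod => i _; apply: ishom_prod => j _; exact: ishom_bin.
Qed.

End B.

Section C.
Variable n : nat.
Variables (adj o : rel 'I_n) (D : 'I_n -> 'I_n -> nat).
Hypothesis Hsg : simple_graph adj.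
Hypothesis Hor : is_orientation adj o.
Hypothesis Hst : is_strength adj D.

Definition arcpoly : {mpoly int[n]} :=
  \prod_(a : 'I_n * 'I_n | o a.1 a.2)
     ('X_(a.2) ^+ D a.1 a.2 - 'X_(a.1) ^+ D a.1 a.2).

Definition csign := #|[pred a : 'I_n * 'I_n | o a.1 a.2 && (a.1 < a.2)%N]|.

Lemma W_sign : arcpoly = (-1) ^+ csign * aug_graph_poly adj D.
Proof.
have [Hirr Hsym] := Hsg; have [Dsym _] := Hst.
rewrite /arcpoly (bigID (fun a : 'I_n * 'I_n => (a.1 < a.2)%N)) /=.
rewrite /aug_graph_poly pair_big_dep /=.
rewrite [in RHS](bigID (fun p : 'I_n * 'I_n => o p.1 p.2)) /= mulrA.
congr (_ * _).
  pose F := fun i : 'I_n * 'I_n => ('X_i.1 ^+ D i.1 i.2 - 'X_i.2 ^+ D i.1 i.2 : {mpoly int[n]}).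
  have Hc : forall i : 'I_n * 'I_n, (i.1 < i.2)%N && adj i.1 i.2 && o i.1 i.2 = o i.1 i.2 && (i.1 < i.2)%N.
    move=> [i j] /=; case: (Hor i j) => Ha _.
    by rewrite Ha; case: (o i j); rewrite ?andbF ?andbT //= orbT andbT.
  transitivity (\prod_(i in [pred a : 'I_n * 'I_n | o a.1 a.2 && (a.1 < a.2)%N]) - F i).
    by apply: eq_big => // i _; rewrite /F opprB.
  rewrite prodrN /csign; congr (_ * _); apply: eq_bigl => i; by rewrite inE Hc.
rewrite (reindex_inj (h := fun a : 'I_n * 'I_n => (a.2, a.1))) /=; last first.
  by move=> [? ?] [? ?] [-> ->].
apply: eq_big => [[i j]|[i j] _] /=; last by rewrite Dsym.
case: (Hor i j) => Ha Hn.
case Oji: (o j i); case Oij: (o i j); rewrite ?Oij ?Oji /= in Hn Ha *.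
- by [].
- rewrite Ha /= andbT; case: (ltngtP i j) => // /val_inj Eij.
  by subst j; move: (Hirr i); rewrite Ha.
- by rewrite andbF.
- by rewrite Ha andbF.
Qed.


Definition m0 : 'X_{1..n} := [multinom aug_indeg o D i | i < n].

Definition mu (J : {set 'I_n * 'I_n}) : 'X_{1..n} :=
  (\sum_(a : 'I_n * 'I_n)
     (U_(if a \in J then a.1 else a.2) *+ (if o a.1 a.2 then D a.1 a.2 else 0%N)))%MM.

Definition Iv (J : {set 'I_n * 'I_n}) (v : 'I_n) := (\sum_(a in J | a.2 == v) D a.1 a.2)%N.
Definition Ov (J : {set 'I_n * 'I_n}) (v : 'I_n) := (\sum_(a in J | a.1 == v) D a.1 a.2)%N.
Definition Rv (J : {set 'I_n * 'I_n}) (v : 'I_n) :=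
  (\sum_(a | a \notin J) (if o a.1 a.2 && (a.2 == v) then D a.1 a.2 else 0))%N.

Lemma mu_v (J : {set 'I_n * 'I_n}) (v : 'I_n) : J \subset [set a | o a.1 a.2] -> mu J v = (Ov J v + Rv J v)%N.
Proof.
move=> /subsetP HJ.
rewrite /mu mnm_sumE (bigID (fun a => a \in J)) /=; congr (_ + _)%N.
  rewrite /Ov big_mkcondr /=; apply: eq_bigr => a aJ.
  have := HJ a aJ; rewrite inE => ->.
  by rewrite aJ mulmnE mnm1E; case: (a.1 == v); rewrite ?mul1n ?mul0n.
rewrite /Rv; apply: eq_bigr => a aJ.
rewrite (negbTE aJ) mulmnE mnm1E.
by case: (o a.1 a.2); case: (a.2 == v); rewrite ?mul1n ?mul0n.
Qed.

Lemma m0_v (J : {set 'I_n * 'I_n}) (v : 'I_n) : J \subset [set a | o a.1 a.2] -> m0 v = (Iv J v + Rv J v)%N.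
Proof.
move=> /subsetP HJ.
have -> : m0 v = (\sum_(a : 'I_n * 'I_n)
    (if o a.1 a.2 && (a.2 == v) then D a.1 a.2 else 0))%N.
  rewrite /m0 mnmE /aug_indeg.
  rewrite -(pair_big predT predT (fun u w => if o u w && (w == v) then D u w else 0%N)) /=.
  rewrite big_mkcond /=; apply: eq_bigr => u _.
  rewrite (bigD1 v) //= eqxx andbT big1 ?addn0 // => w Hw.
  by rewrite (negbTE Hw) andbF.
rewrite (bigID (fun a => a \in J)) /=; congr (_ + _)%N.
rewrite /Iv big_mkcondr /=; apply: eq_bigr => a aJ.
by have := HJ a aJ; rewrite inE => ->.
Qed.

Lemma mu_m0 (J : {set 'I_n * 'I_n}) : J \subset [set a | o a.1 a.2] ->
  (mu J == m0) = eulerian_structure o D J.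
Proof.
move=> HJ; rewrite /eulerian_structure HJ /=.
apply/eqP/forallP => [H v|H].
  by move: (congr1 (fun m : 'X_{1..n} => m v) H) => /=; rewrite (mu_v v HJ) (m0_v v HJ) => /eqP;
     rewrite eqn_add2r eq_sym.
apply/mnmP => v; rewrite (mu_v v HJ) (m0_v v HJ); congr (_ + _)%N.
by apply/esym/eqP; exact: H.
Qed.


Definition Fa (a : 'I_n * 'I_n) : {mpoly int[n]} :=
  if o a.1 a.2 then - 'X_(a.1) ^+ D a.1 a.2 else 0.
Definition Ga (a : 'I_n * 'I_n) : {mpoly int[n]} :=
  if o a.1 a.2 then 'X_(a.2) ^+ D a.1 a.2 else 1.

Lemma arcpoly_expand : arcpoly =
  \sum_(J in {set 'I_n * 'I_n}) \prod_(a : 'I_n * 'I_n) (if a \in J then Fa a else Ga a).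
Proof.
rewrite -bigA_distr /arcpoly big_mkcond /=; apply: eq_bigr => a _.
by rewrite /Fa /Ga; case: (o a.1 a.2); rewrite ?add0r // addrC.
Qed.

Lemma term_coef (J : {set 'I_n * 'I_n}) :
  (\prod_(a : 'I_n * 'I_n) (if a \in J then Fa a else Ga a))@_m0 =
  if eulerian_structure o D J then (-1) ^+ #|J| else 0.
Proof.
case: (boolP (J \subset [set a | o a.1 a.2])) => HJ; last first.
  have -> : eulerian_structure o D J = false by rewrite /eulerian_structure (negbTE HJ).
  case/subsetPn: HJ => a aJ; rewrite inE => Ha.
  by rewrite (bigD1 a) //= aJ /Fa (negbTE Ha) mul0r mcoeff0.
rewrite -mu_m0 //.
have -> : \prod_(a : 'I_n * 'I_n) (if a \in J then Fa a else Ga a) =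
  \prod_(a : 'I_n * 'I_n) ((if a \in J then -1 else 1) *:
     'X_[U_(if a \in J then a.1 else a.2)] ^+ (if o a.1 a.2 then D a.1 a.2 else 0%N)).
  apply: eq_bigr => a _; rewrite /Fa /Ga.
  case aJ: (a \in J).
    by have := subsetP HJ a aJ; rewrite inE => ->; rewrite scaleN1r.
  by case: (o a.1 a.2); rewrite ?expr0 scale1r.
rewrite scaler_prod mprodXnE -big_mkcond /= prodr_const mcoeffZ mcoeffX.
by case: (mu J == m0); rewrite ?mulr1 ?mulr0.
Qed.


Lemma arcpoly_coef :
  arcpoly@_m0 = (num_even_ES o D)%:R - (num_odd_ES o D)%:R.
Proof.
rewrite arcpoly_expand raddf_sum /=.
under eq_bigr => J _ do rewrite term_coef.
rewrite -big_mkcond /= (bigID (fun J : {set 'I_n * 'I_n} => odd #|J|)) /= addrC.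
congr (_ + _).
  transitivity (\sum_(J in [set F : {set 'I_n * 'I_n} |
        eulerian_structure o D F && ~~ odd #|F|]) (1 : int)).
    apply: eq_big => [J|J /andP[_ Hodd]]; first by rewrite inE.
    by rewrite -signr_odd (negbTE Hodd).
  by rewrite sumr_const.
transitivity (- \sum_(J in [set F : {set 'I_n * 'I_n} |
      eulerian_structure o D F && odd #|F|]) (1 : int)).
  rewrite -sumrN; apply: eq_big => [J|J /andP[_ Hodd]]; first by rewrite inE.
  by rewrite -signr_odd Hodd.
by rewrite sumr_const.
Qed.

Lemma W_coef_neq0 : num_even_ES o D <> num_odd_ES o D ->
  (aug_graph_poly adj D)@_m0 != 0.
Proof.
move=> Hne.
have : arcpoly@_m0 != 0.
  by rewrite arcpoly_coef subr_eq0 Num.Theory.eqr_nat; apply/eqP.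
rewrite W_sign -signr_odd mulr_sign.
by case: (odd csign); rewrite ?mcoeffN ?oppr_eq0.
Qed.

End C.

Local Close Scope ring_scope.
Unset Implicit Arguments.

Theorem lemma2p7 (n : nat) (adj o : rel 'I_n) (D : 'I_n -> 'I_n -> nat) :
  simple_graph adj -> is_orientation adj o -> is_strength adj D ->
  num_even_ES o D <> num_odd_ES o D ->
  [/\ (AT adj - 1)%N = alpha (graph_poly adj),
      (alpha (graph_poly adj) <= alpha (aug_graph_poly adj D))%N
    & (alpha (aug_graph_poly adj D) <= max_aug_indeg o D)%N].
Proof.
move=> Hsg Hor Hst Hne.
have Hc := W_coef_neq0 Hsg Hor Hst Hne.
have Hm : m0 o D \in msupp (aug_graph_poly adj D) by rewrite mcoeff_msupp.
have [d Hd] := aug_hom adj D.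
have Hdeg := homog_deg Hd Hm.
split.
- by rewrite /AT subn1.
- have [q Eq] := aug_factor adj D.
  rewrite Eq in Hm Hdeg *.
  exact: alpha_mono (graph_poly_hom adj) Hm Hdeg.
- apply: leq_trans (alpha_le Hm Hdeg) _.
  rewrite /max_aug_indeg; apply: eq_leq; apply: eq_bigr => i _; by rewrite mnmE.
Qed.
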